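(* Let $H$ be a real separable Hilbert space, $k,q\in\mathbb{N}$ and $n=k+q$. Then, inside $H^{\otimes n}$, \[ H_{k,q}=H_{k,q}^+\oplus H_{k,q}^-, \] where $H_{k,q}=H^{\odot k}\otimes H^{\wedge q}$, $H_{k,q}^+=H_{k,q}\cap H^{\odot[k+1],\wedge[q-1]}$ and $H_{k,q}^-=H_{k,q}\cap H^{\odot[k-1],\wedge[q+1]}$.
   Context: $H^{\otimes n}$ is the Hilbert-space completed $n$-th tensor power of $H$; $H^{\odot k}\otimes H^{\wedge q}$ is the closed subspace of elements of $H^{\otimes n}$ that are symmetric in the first $k$ tensor factors and skew-symmetric in the last $q$ factors. For integers $m,p\ge0$ with $m+p=n$, $H^{\odot[m],\wedge[p]}$ denotes the closed linear span of all elements of $H^{\otimes n}$ that are symmetric in some set of $m$ tensor positions and skew-symmetric in the remaining $p$ positions (the set of positions is not fixed; it ranges over all $m$-element subsets of $\{1,\dots,n\}$). If $m$ or $p$ is negative, $H^{\odot[m],\wedge[p]}$ is taken to be $\{0\}$. *)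

(* Defs.v *)
From HB Require Import structures.
From mathcomp Require Import all_boot all_order all_algebra all_fingroup.
From mathcomp Require Import all_classical all_reals.
From mathcomp Require Import ereal esum.
Set Implicit Arguments. Unset Strict Implicit. Unset Printing Implicit Defensive.
Import Order.TTheory GRing.Theory Num.Theory.
Local Open Scope classical_set_scope.
Local Open Scope ring_scope.

(* Model: a real separable Hilbert space H is (isometric to) l^2(I) for a
   countable index type I (an orthonormal basis).  Then the Hilbert-space
   completed tensor power H^{(x)n} is l^2(I^n), I^n = {ffun 'I_n -> I}, and the
   permutation of tensor factors by s acts by permuting coordinates. *)

Section TensorPower.
Variables (R : realType) (I : countType).

Definition multi (n : nat) := {ffun 'I_n -> I}.
Definition vec (n : nat) := multi n -> R.

Definition sqnorm n (f : vec n) : \bar R :=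
  (\esum_(x in [set: multi n]) ((f x) ^+ 2)%:E)%E.

Definition in_l2 n (f : vec n) : Prop := (sqnorm f < +oo)%E.

(* inner product <f, g> = sum over I^n of f x * g x (absolutely convergent
   for f, g in l^2), written as positive part minus negative part *)
Definition inner n (f g : vec n) : R :=
  fine (\esum_(x in [set: multi n]) (Num.max (f x * g x) 0)%R%:E)%E -
  fine (\esum_(x in [set: multi n]) (Num.max (- (f x * g x)) 0)%R%:E)%E.

Definition pact n (s : 'S_n) (f : vec n) : vec n :=
  fun x => f [ffun i => x (s i)].

Definition symm_on n (A : {set 'I_n}) (f : vec n) : Prop :=
  forall s : 'S_n, perm_on A s -> pact s f = f.

Definition skew_on n (A : {set 'I_n}) (f : vec n) : Prop :=
  forall s : 'S_n, perm_on A s -> pact s f = (fun x => (-1) ^+ odd_perm s * f x).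

Definition Hkq (k q : nat) : set (vec (k + q)) :=
  [set f | in_l2 f /\
     symm_on [set i : 'I_(k + q) | (i < k)%N] f /\
     skew_on [set i : 'I_(k + q) | (k <= i)%N] f].

Definition lspan n (S : set (vec n)) : set (vec n) :=
  [set f | exists m (c : 'I_m -> R) (g : 'I_m -> vec n),
     (forall i, S (g i)) /\ f = (fun x => \sum_(i < m) c i * g i x)].

Definition l2closure n (S : set (vec n)) : set (vec n) :=
  [set f | in_l2 f /\ forall e : R, 0 < e ->
     exists g, S g /\ (sqnorm (fun x => (f x - g x)%R) < e%:E)%E].

Definition mixed_gens n (m : nat) : set (vec n) :=
  [set f | in_l2 f /\ exists A : {set 'I_n},
     #|A| = m /\ symm_on A f /\ skew_on (~: A) f].

(* H^{(.)[m], /\[p]} inside H^{(x)n}; {0} if m or p is negative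
   (or if m + p <> n, which never happens in the uses below) *)
Definition mixed n (m p : int) : set (vec n) :=
  if (0 <= m) && (0 <= p) && (m + p == n%:Z)
  then l2closure (lspan (@mixed_gens n `|m|%N))
  else [set (fun _ => 0)].

End TensorPower.

(* Main.v *)
Require Import Defs.
From HB Require Import structures.
From mathcomp Require Import all_boot all_order all_algebra all_fingroup.
From mathcomp Require Import all_classical all_reals.
From mathcomp Require Import ereal esum.
From mathcomp Require Import lra zify.
Import Order.TTheory GRing.Theory Num.Theory.

Local Open Scope ring_scope.
Set Implicit Arguments. Unset Strict Implicit. Unset Printing Implicit Defensive.

Section Perm.
Variables (R : realType) (I : countType) (n : nat).
Implicit Types (f g h : vec R I n) (s t : 'S_n) (B : {set 'I_n}).

Definition ix s (x : multi I n) : multi I n := [ffun i => x (s i)].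

Lemma ixM s t x : ix s (ix t x) = ix (s * t)%g x.
Proof. by apply/ffunP => i; rewrite !ffunE permM. Qed.

Lemma ix1 x : ix 1 x = x.
Proof. by apply/ffunP => i; rewrite !ffunE perm1. Qed.

Lemma pactE s f x : pact s f x = f (ix s x).
Proof. by []. Qed.

Lemma pactM s t f : pact s (pact t f) = pact (t * s)%g f.
Proof. by apply: funext => x; rewrite !pactE ixM. Qed.

Lemma pact1 f : pact 1 f = f.
Proof. by apply: funext => x; rewrite pactE ix1. Qed.

Lemma ix_inv s x : ix s (ix s^-1 x) = x.
Proof. by rewrite ixM mulgV ix1. Qed.
Lemma ix_inv' s x : ix s^-1 (ix s x) = x.
Proof. by rewrite ixM mulVg ix1. Qed.

Definition sgn s : R := (-1) ^+ odd_perm s.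

Lemma sgnM s t : sgn (s * t)%g = sgn s * sgn t.
Proof. by rewrite /sgn odd_permM signr_addb. Qed.

Lemma sgn_sq s : sgn s * sgn s = 1.
Proof. by rewrite /sgn -signr_addb addbb. Qed.

Lemma sgn_tperm (a b : 'I_n) : a != b -> sgn (tperm a b) = -1.
Proof. by move=> ab; rewrite /sgn odd_tperm ab expr1. Qed.

Definition symF B f : vec R I n := fun x => \sum_(s | perm_on B s) pact s f x.
Definition altF B f : vec R I n := fun x => \sum_(s | perm_on B s) sgn s * pact s f x.

Lemma perm_onMl B s t : perm_on B t -> perm_on B (t * s)%g = perm_on B s.
Proof.
move=> Bt; apply/idP/idP => [Bts|Bs]; last exact: perm_onM.
by rewrite -(mulKg t s)%g; apply: perm_onM => //; apply: perm_onV.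
Qed.

Lemma perm_onMr B s t : perm_on B t -> perm_on B (s * t)%g = perm_on B s.
Proof.
move=> Bt; apply/idP/idP => [Bst|Bs]; last exact: perm_onM.
by rewrite -(mulgK t s)%g; apply: perm_onM => //; apply: perm_onV.
Qed.

Lemma reindexl B t (F : 'S_n -> R) : perm_on B t ->
  \sum_(s | perm_on B s) F s = \sum_(s | perm_on B s) F (t * s)%g.
Proof.
move=> Bt; rewrite (reindex_inj (mulgI t)) /=.
by apply: eq_bigl => s; rewrite perm_onMl.
Qed.

Lemma reindexr B t (F : 'S_n -> R) : perm_on B t ->
  \sum_(s | perm_on B s) F s = \sum_(s | perm_on B s) F (s * t)%g.
Proof.
move=> Bt; rewrite (reindex_inj (mulIg t)) /=.
by apply: eq_bigl => s; rewrite perm_onMr.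
Qed.

Lemma symF_symm B f : symm_on B (symF B f).
Proof.
move=> t Bt; apply: funext => x; rewrite pactE /symF [RHS](reindexr _ Bt).
by apply: eq_bigr => s _; rewrite !pactE ixM.
Qed.

Lemma altF_skew B f : skew_on B (altF B f).
Proof.
move=> t Bt; apply: funext => x; rewrite pactE /altF [in RHS](reindexr _ Bt).
rewrite -/(sgn t) mulr_sumr; apply: eq_bigr => s _.
rewrite !pactE ixM sgnM mulrA mulrA (mulrC (sgn t)) -(mulrA (sgn s)).
by rewrite sgn_sq mulr1.
Qed.

Lemma symm_onS (A B : {set 'I_n}) f : A \subset B -> symm_on B f -> symm_on A f.
Proof. move=> AB sB s As; apply: sB. rewrite /perm_on; exact: (fintype.subset_trans As AB). Qed.

Lemma skew_onS (A B : {set 'I_n}) f : A \subset B -> skew_on B f -> skew_on A f.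
Proof. by move=> AB sB s As; apply: sB; rewrite /perm_on; exact: (fintype.subset_trans As AB). Qed.

Lemma skew_app (E : {set 'I_n}) f t y : skew_on E f -> perm_on E t ->
  f (ix t y) = sgn t * f y.
Proof. by move=> sk Et; have := congr1 (fun g => g y) (sk t Et). Qed.

Lemma symm_app (E : {set 'I_n}) f t y : symm_on E f -> perm_on E t ->
  f (ix t y) = f y.
Proof. by move=> sk Et; have := congr1 (fun g => g y) (sk t Et). Qed.

Lemma symF_skew_out B (E : {set 'I_n}) f : [disjoint B & E] -> skew_on E f -> skew_on E (symF B f).
Proof.
move=> dBE sk t Et; apply: funext => x; rewrite pactE /symF mulr_sumr.
apply: eq_bigr => s Bs; rewrite !pactE ixM.
have -> : (s * t = t * s)%g by exact: (perm_onC Bs Et dBE).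
by rewrite -ixM (skew_app _ sk Et).
Qed.

Lemma symF_symm_out B (E : {set 'I_n}) f : [disjoint B & E] -> symm_on E f -> symm_on E (symF B f).
Proof.
move=> dBE sk t Et; apply: funext => x; rewrite pactE /symF.
apply: eq_bigr => s Bs; rewrite !pactE ixM.
have -> : (s * t = t * s)%g by exact: (perm_onC Bs Et dBE).
by rewrite -ixM (symm_app _ sk Et).
Qed.

Lemma altF_skew_out B (E : {set 'I_n}) f : [disjoint B & E] -> skew_on E f -> skew_on E (altF B f).
Proof.
move=> dBE sk t Et; apply: funext => x; rewrite pactE /altF mulr_sumr.
apply: eq_bigr => s Bs; rewrite !pactE ixM.
have -> : (s * t = t * s)%g by exact: (perm_onC Bs Et dBE).
rewrite -ixM (skew_app _ sk Et).
by rewrite mulrCA.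
Qed.

Lemma altF_symm_out B (E : {set 'I_n}) f : [disjoint B & E] -> symm_on E f -> symm_on E (altF B f).
Proof.
move=> dBE sk t Et; apply: funext => x; rewrite pactE /altF.
apply: eq_bigr => s Bs; rewrite !pactE ixM.
have -> : (s * t = t * s)%g by exact: (perm_onC Bs Et dBE).
by rewrite -ixM (symm_app _ sk Et).
Qed.

Lemma altF_kill B (D : {set 'I_n}) f (a b : 'I_n) : a != b -> a \in B -> b \in B ->
  a \in D -> b \in D -> symm_on D f -> forall x, altF B f x = 0.
Proof.
move=> ab aB bB aD bD sD x.
have tB : perm_on B (tperm a b).
  apply: fintype.subset_trans (tperm_on a b) _; apply/fintype.subsetP => z.
  by rewrite !inE => /orP[]/eqP->.
have tD : perm_on D (tperm a b).
  apply: fintype.subset_trans (tperm_on a b) _; apply/fintype.subsetP => z.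
  by rewrite !inE => /orP[]/eqP->.
have E : altF B f x = - altF B f x.
  rewrite {1}/altF (reindexl _ tB) /altF -sumrN; apply: eq_bigr => s _.
  by rewrite sgnM sgn_tperm // -pactM (sD _ tD) mulN1r mulNr.
by move: E; set y := altF B f x; lra.
Qed.

Lemma symF_kill B (D : {set 'I_n}) f (a b : 'I_n) : a != b -> a \in B -> b \in B ->
  a \in D -> b \in D -> skew_on D f -> forall x, symF B f x = 0.
Proof.
move=> ab aB bB aD bD sD x.
have tB : perm_on B (tperm a b).
  apply: fintype.subset_trans (tperm_on a b) _; apply/fintype.subsetP => z.
  by rewrite !inE => /orP[]/eqP->.
have tD : perm_on D (tperm a b).
  apply: fintype.subset_trans (tperm_on a b) _; apply/fintype.subsetP => z.
  by rewrite !inE => /orP[]/eqP->.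
have E : symF B f x = - symF B f x.
  rewrite {1}/symF (reindexl _ tB) /symF -sumrN; apply: eq_bigr => s _.
  by rewrite -pactM (sD _ tD) -/(sgn _) sgn_tperm // pactE mulN1r.
by move: E; set y := symF B f x; lra.
Qed.


Lemma coset_sum (A : {set 'I_n}) (j : 'I_n) (F : 'S_n -> R) : j \notin A ->
  \sum_(s | perm_on (j |: A) s) F s =
  \sum_(c in j |: A) \sum_(r | perm_on A r) F (r * tperm c j)%g.
Proof.
move=> jA.
rewrite (partition_big (fun s : 'S_n => s j) (mem (j |: A))); last first.
  by move=> s Bs; rewrite inE /= (perm_closed _ Bs) setU11.
apply: eq_bigr => c cB.
rewrite (reindex_onto (fun r : 'S_n => (r * tperm c j)%g) (fun s : 'S_n => (s * tperm c j)%g)); last first.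
  by move=> s _; rewrite -mulgA tperm2 mulg1.
apply: eq_bigl => r; rewrite -mulgA tperm2 mulg1 eqxx andbT permM.
have tB : perm_on (j |: A) (tperm c j).
  have H : [set c; j] \subset j |: A.
    apply/fintype.subsetP => z.
    rewrite !inE => /orP[]/eqP->; rewrite ?eqxx ?orbT //.
    by have := cB; rewrite /= !inE.
  exact: fintype.subset_trans (tperm_on c j) H.
rewrite perm_onMr //.
apply/idP/idP.
  case/andP => Br /eqP rj.
  have rjj : r j = j.
    by apply: (@perm_inj _ (tperm c j)); rewrite rj tpermR.
  apply/fintype.subsetP => z; rewrite inE => rz.
  have := fintype.subsetP Br z; rewrite inE => /(_ rz); rewrite !inE.
  by case/orP => // /eqP zj; move: rz; rewrite zj rjj eqxx.
move=> Ar; have rjj : r j = j by apply: (out_perm Ar).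
rewrite rjj tpermR eqxx andbT.
exact: fintype.subset_trans Ar (subsetU1 j A).
Qed.

Definition syA (A : {set 'I_n}) (j : 'I_n) f : vec R I n :=
  fun x => f x + \sum_(c in A) pact (tperm c j) f x.
Definition alE (E : {set 'I_n}) (i : 'I_n) f : vec R I n :=
  fun x => f x - \sum_(c in E) pact (tperm i c) f x.

Lemma symF_coset (A : {set 'I_n}) j f x : j \notin A -> symm_on A f ->
  symF (j |: A) f x = (#|perm_on A|)%:R * syA A j f x.
Proof.
move=> jA sA; rewrite /symF (coset_sum _ jA).
have E c : \sum_(r | perm_on A r) pact (r * tperm c j)%g f x
    = (#|perm_on A|)%:R * pact (tperm c j) f x.
  rewrite (eq_bigr (fun _ => pact (tperm c j) f x)); last first.
    by move=> r Ar; rewrite -pactM (sA r Ar).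
  by rewrite sumr_const mulr_natl.
rewrite (eq_bigr _ (fun c _ => E c)) -mulr_sumr /syA; congr (_ * _).
rewrite (bigD1 j) ?setU11 //= tperm1 pact1; congr (_ + _).
apply: eq_bigl => c; rewrite !inE.
by case: eqVneq => [->|]; rewrite ?(negbTE jA) ?andbF ?andbT.
Qed.

Lemma altF_coset (E : {set 'I_n}) i f x : i \notin E -> skew_on E f ->
  altF (i |: E) f x = (#|perm_on E|)%:R * alE E i f x.
Proof.
move=> iE sE; rewrite /altF (coset_sum _ iE).
have H c : \sum_(r | perm_on E r) sgn (r * tperm c i)%g * pact (r * tperm c i)%g f x
    = (#|perm_on E|)%:R * (sgn (tperm c i) * pact (tperm c i) f x).
  rewrite (eq_bigr (fun _ => sgn (tperm c i) * pact (tperm c i) f x)); last first.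
    move=> r Er; rewrite -pactM (sE r Er) sgnM.
    rewrite [pact _ _ x]/pact -/(sgn r) mulrCA -!mulrA mulrA sgn_sq mul1r.
    by rewrite -/(sgn r) mulrC.
  by rewrite sumr_const mulr_natl.
rewrite (eq_bigr _ (fun c _ => H c)) -mulr_sumr /alE; congr (_ * _).
rewrite (bigD1 i) ?setU11 //= tperm1 pact1 /sgn odd_perm1 expr0 mul1r; congr (_ + _).
rewrite -sumrN; apply: eq_big => c.
  by rewrite !inE; case: eqVneq => [->|]; rewrite ?(negbTE iE) ?andbF ?andbT.
rewrite !inE => /andP[_ ci].
by rewrite -/(sgn _) sgn_tperm // tpermC mulN1r.
Qed.

Lemma key_identity (A : {set 'I_n}) f x :
  \sum_(j in ~: A) syA A j f x + \sum_(i in A) alE (~: A) i f x = n%:R * f x.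
Proof.
rewrite /syA /alE big_split /= sumrB exchange_big /=.
rewrite addrACA subrr addr0 !sumr_const -mulrnDr addnC cardsC card_ord.
by rewrite mulr_natl.
Qed.


Lemma pactJ r (a b : 'I_n) f :
  pact r (pact (tperm a b) f) = pact (tperm (r a) (r b)) (pact r f).
Proof. by rewrite !pactM -tpermJ /conjg mulKVg. Qed.

Lemma pact_app r f x : pact r f x = f (ix r x). Proof. by []. Qed.

Lemma reindex_in (A : {set 'I_n}) r (F : 'I_n -> R) : perm_on A r ->
  \sum_(c in A) F (r c) = \sum_(c in A) F c.
Proof.
move=> Ar; rewrite [RHS](reindex_inj (@perm_inj _ r)) /=.
by apply: eq_bigl => c; rewrite (perm_closed _ Ar).
Qed.

Lemma reindex_out (A B : {set 'I_n}) r (F : 'I_n -> R) : perm_on B r ->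
  [disjoint A & B] -> \sum_(c in A) F (r c) = \sum_(c in A) F c.
Proof.
move=> Br dAB; apply: eq_bigr => c cA; rewrite (out_perm Br) //.
by apply: contraL dAB => cB; apply/pred0Pn; exists c; rewrite /= cA.
Qed.

Definition Gop (A : {set 'I_n}) f : vec R I n := fun x => \sum_(j in ~: A) syA A j f x.
Definition Hop (A : {set 'I_n}) f : vec R I n := fun x => \sum_(i in A) alE (~: A) i f x.

Lemma disjC (A : {set 'I_n}) : [disjoint A & ~: A].
Proof. by rewrite -setI_eq0 finset.setICr. Qed.
Lemma disjC' (A : {set 'I_n}) : [disjoint ~: A & A].
Proof. by rewrite -setI_eq0 finset.setIC finset.setICr. Qed.

Lemma Gop_symm A f : symm_on A f -> skew_on (~: A) f -> symm_on A (Gop A f).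
Proof.
move=> sA kA r Ar; apply: funext => x; rewrite pact_app /Gop.
apply: eq_bigr => j jA; rewrite /syA -!pact_app (sA r Ar); congr (_ + _).
rewrite -[in RHS](reindex_in _ Ar); apply: eq_bigr => c _.
rewrite -pact_app pactJ (sA r Ar) (@out_perm _ A r j Ar) //.
by rewrite inE in jA.
Qed.

Lemma Gop_skew A f : symm_on A f -> skew_on (~: A) f -> skew_on (~: A) (Gop A f).
Proof.
move=> sA kA r Ar; apply: funext => x; rewrite pact_app /Gop -/(sgn r) mulr_sumr.
rewrite -[in RHS](reindex_in _ Ar); apply: eq_bigr => j jA.
rewrite /syA -!pact_app (kA r Ar) mulrDr; congr (_ + _).
rewrite mulr_sumr; apply: eq_bigr => c cA.
rewrite -pact_app pactJ (kA r Ar) (@out_perm _ (~: A) r c Ar) ?inE ?negbK //.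
Qed.

Lemma Hop_symm A f : symm_on A f -> skew_on (~: A) f -> symm_on A (Hop A f).
Proof.
move=> sA kA r Ar; apply: funext => x; rewrite pact_app /Hop.
rewrite -[in RHS](reindex_in _ Ar); apply: eq_bigr => i iA.
rewrite /alE -!pact_app (sA r Ar); congr (_ - _).
apply: eq_bigr => c cA.
rewrite -pact_app pactJ (sA r Ar) (@out_perm _ A r c Ar) //.
by rewrite inE in cA.
Qed.

Lemma Hop_skew A f : symm_on A f -> skew_on (~: A) f -> skew_on (~: A) (Hop A f).
Proof.
move=> sA kA r Ar; apply: funext => x; rewrite pact_app /Hop -/(sgn r) mulr_sumr.
apply: eq_bigr => i iA.
rewrite /alE -!pact_app (kA r Ar) mulrBr; congr (_ - _).
rewrite mulr_sumr -[in RHS](reindex_in _ Ar); apply: eq_bigr => c cA.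
rewrite -pact_app pactJ (kA r Ar) (@out_perm _ (~: A) r i Ar) ?inE ?negbK //.
Qed.

Lemma maxr_id (a : R) : (Num.max a 0 - Num.max (- a) 0 = a)%R.
Proof.
case: (lerP a 0) => ha.
  by rewrite max_l ?oppr_ge0 // sub0r opprK.
by rewrite max_r ?subr0 // oppr_le0 ltW.
Qed.

End Perm.

Section Analysis.
Variables (R : realType) (I : countType) (n : nat).
Implicit Types (u v : vec R I n) (p r : multi I n -> R).
Local Open Scope ereal_scope.

Definition summ p := \esum_(x in [set: multi I n]) (`|p x|)%:E < +oo.

Lemma esum_natmul (m : nat) p : (forall x, (0 <= p x)%R) ->
  \esum_(x in [set: multi I n]) (p x)%:E < +oo ->
  \esum_(x in [set: multi I n]) (m%:R * p x)%:E < +oo.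
Proof.
move=> p0 pf; elim: m => [|m IH].
  by rewrite (@esum1 _ _ _ (fun x => (0%:R * p x)%:E)) // => x _; rewrite mul0r.
rewrite (eq_esum (b := fun x => (p x)%:E + (m%:R * p x)%:E)); last first.
  by move=> x _; rewrite -EFinD -addn1 natrD mulrDl mul1r addrC.
rewrite esumD //; first exact: lte_add_pinfty.
  by move=> x _; rewrite lee_fin.
by move=> x _; rewrite lee_fin mulr_ge0.
Qed.

Lemma esum_le_fin p r : (forall x, (0 <= p x <= r x)%R) ->
  \esum_(x in [set: multi I n]) (r x)%:E < +oo ->
  \esum_(x in [set: multi I n]) (p x)%:E < +oo.
Proof.
move=> H; apply: le_lt_trans; apply: le_esum => x _.
by rewrite lee_fin; case/andP: (H x).
Qed.

Lemma esum_add_fin p r : (forall x, (0 <= p x)%R) -> (forall x, (0 <= r x)%R) ->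
  \esum_(x in [set: multi I n]) (p x)%:E < +oo ->
  \esum_(x in [set: multi I n]) (r x)%:E < +oo ->
  \esum_(x in [set: multi I n]) (p x + r x)%:E < +oo.
Proof.
move=> p0 r0 pf rf; rewrite (eq_esum (b := fun x => (p x)%:E + (r x)%:E)).
  rewrite esumD; first exact: lte_add_pinfty.
    by move=> x _; rewrite lee_fin.
  by move=> x _; rewrite lee_fin.
by move=> x _; rewrite EFinD.
Qed.

Lemma in_l2_0 : in_l2 (fun _ : multi I n => 0%R : R).
Proof.
rewrite /in_l2 /sqnorm (@esum1 _ _ _ (fun x => ((0:R) ^+ 2)%:E)) //.
by move=> x _; rewrite expr0n.
Qed.

Lemma in_l2_add u v : in_l2 u -> in_l2 v -> in_l2 (fun x => u x + v x)%R.
Proof.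
rewrite /in_l2 /sqnorm => fu fv.
apply: (esum_le_fin (r := fun x => 2%:R * (u x ^+ 2 + v x ^+ 2))%R).
  move=> x; rewrite sqr_ge0 /=; set a := u x; set b := v x.
  have := sqr_ge0 (a - b); rewrite !expr2 => h. nra.
apply: esum_natmul => [x|]; first by rewrite addr_ge0 ?sqr_ge0.
by apply: esum_add_fin => // x; rewrite sqr_ge0.
Qed.

Lemma in_l2_scale (a : R) u : in_l2 u -> in_l2 (fun x => a * u x)%R.
Proof.
rewrite /in_l2 /sqnorm => fu.
have a0 : (0 <= a ^+ 2)%R by rewrite sqr_ge0.
apply: (esum_le_fin (r := fun x => (Num.Def.archi_bound (a ^+ 2))%:R * (u x ^+ 2))%R).
  move=> x; rewrite sqr_ge0 /= exprMn ler_wpM2r ?sqr_ge0 //.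
  exact: ltW (archi_boundP a0).
by apply: esum_natmul => // x; rewrite sqr_ge0.
Qed.

Lemma ix_bij (s : 'S_n) : bijective (ix (I:=I) s).
Proof. by exists (ix s^-1) => x; [rewrite ix_inv' | rewrite ix_inv]. Qed.

Lemma esum_ix (s : 'S_n) (a : multi I n -> \bar R) :
  \esum_(x in [set: multi I n]) a (ix s x) = \esum_(x in [set: multi I n]) a x.
Proof.
have hb : set_bij [set: multi I n] [set: multi I n] (ix (I:=I) s).
  by rewrite setTT_bijective; exact: ix_bij.
by rewrite [RHS](@reindex_esum R _ _ _ _ _ a hb).
Qed.

Lemma in_l2_pact (s : 'S_n) u : in_l2 u -> in_l2 (pact s u).
Proof. by rewrite /in_l2 /sqnorm (esum_ix s (fun x => (u x ^+ 2)%:E)). Qed.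

Lemma in_l2_ext u v : (forall x, u x = v x) -> in_l2 u -> in_l2 v.
Proof. by move=> e; rewrite (_ : u = v) //; apply: funext. Qed.

Lemma in_l2_sum (J : Type) (rs : seq J) (P : pred J) (F : J -> vec R I n) :
  (forall j, P j -> in_l2 (F j)) ->
  in_l2 (fun x => \sum_(j <- rs | P j) F j x)%R.
Proof.
move=> H; elim: rs => [|j rs IH].
  by apply: (in_l2_ext _ in_l2_0) => x; rewrite big_nil.
case Pj: (P j).
  apply: (in_l2_ext (u := fun x => F j x + \sum_(j <- rs | P j) F j x)%R).
    by move=> x; rewrite big_cons Pj.
  by apply: in_l2_add => //; apply: H.
by apply: (in_l2_ext _ IH) => x; rewrite big_cons Pj.
Qed.


Definition Pp p := \esum_(x in [set: multi I n]) (Num.max (p x) 0%R)%:E.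
Definition Np p := \esum_(x in [set: multi I n]) (Num.max (- p x) 0%R)%:E.
Definition Sp p : R := (fine (Pp p) - fine (Np p))%R.

Lemma innerE u v : inner u v = Sp (fun x => u x * v x)%R.
Proof. by []. Qed.

Lemma Pp_fin p : summ p -> Pp p \is a fin_num.
Proof.
move=> sp; rewrite ge0_fin_numE; last by apply: esum_ge0 => x _; rewrite lee_fin le_max lexx orbT.
apply: le_lt_trans sp; apply: le_esum => x _; rewrite lee_fin ge_max normr_ge0 andbT.
exact: ler_norm.
Qed.

Lemma Np_fin p : summ p -> Np p \is a fin_num.
Proof.
move=> sp; rewrite ge0_fin_numE; last by apply: esum_ge0 => x _; rewrite lee_fin le_max lexx orbT.
apply: le_lt_trans sp; apply: le_esum => x _; rewrite lee_fin ge_max normr_ge0 andbT.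
by rewrite -normrN; exact: ler_norm.
Qed.

Lemma summ_add p r : summ p -> summ r -> summ (fun x => p x + r x)%R.
Proof.
move=> sp sr; apply: (esum_le_fin (r := fun x => `|p x| + `|r x|)%R).
  by move=> x; rewrite normr_ge0 ler_normD.
by apply: esum_add_fin.
Qed.

Lemma Sp_add p r : summ p -> summ r -> Sp (fun x => p x + r x)%R = (Sp p + Sp r)%R.
Proof.
move=> sp sr.
have spr := summ_add sp sr.
have E : Pp (fun x => p x + r x)%R + (Np p + Np r) =
         Np (fun x => p x + r x)%R + (Pp p + Pp r).
  rewrite /Pp /Np -!esumD; try by move=> x _; rewrite lee_fin le_max lexx orbT.
  - apply: eq_esum => x _; rewrite -!EFinD; congr (_%:E).
    have h1 := maxr_id (p x + r x); have h2 := maxr_id (p x); have h3 := maxr_id (r x).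
    lra.
  - by move=> x _; rewrite adde_ge0 // lee_fin le_max lexx orbT.
  - by move=> x _; rewrite adde_ge0 // lee_fin le_max lexx orbT.
have := congr1 fine E.
rewrite !fineD ?fin_numD ?Np_fin ?Pp_fin //.
rewrite /Sp => h; lra.
Qed.

Lemma Sp0 : Sp (fun _ => 0%R) = 0%R.
Proof.
rewrite /Sp /Pp /Np !esum1 ?subrr // => x _; rewrite ?oppr0 maxxx //.
Qed.

Lemma Sp_ext p r : (forall x, p x = r x) -> Sp p = Sp r.
Proof. by move=> e; rewrite (_ : p = r) //; apply: funext. Qed.

Lemma Sp_ix (s : 'S_n) p : Sp (fun x => p (ix s x)) = Sp p.
Proof.
rewrite /Sp /Pp /Np.
rewrite (esum_ix s (fun x => (Num.max (p x) 0%R)%:E)).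
by rewrite (esum_ix s (fun x => (Num.max (- p x) 0%R)%:E)).
Qed.

Lemma summ_ext p r : (forall x, p x = r x) -> summ p -> summ r.
Proof. by move=> e; rewrite (_ : p = r) //; apply: funext. Qed.

Lemma summ0 : summ (fun _ => 0%R).
Proof. by rewrite /summ esum1 // => x _; rewrite normr0. Qed.

Lemma summ_sum (J : Type) (rs : seq J) (P : pred J) (F : J -> multi I n -> R) :
  (forall j, P j -> summ (F j)) ->
  summ (fun x => \sum_(j <- rs | P j) F j x)%R.
Proof.
move=> H; elim: rs => [|j rs IH].
  by apply: (summ_ext _ summ0) => x; rewrite big_nil.
case Pj: (P j).
  apply: (summ_ext (p := fun x => F j x + \sum_(j <- rs | P j) F j x)%R).
    by move=> x; rewrite big_cons Pj.
  by apply: summ_add => //; apply: H.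
by apply: (summ_ext _ IH) => x; rewrite big_cons Pj.
Qed.

Lemma Sp_sum (J : Type) (rs : seq J) (P : pred J) (F : J -> multi I n -> R) :
  (forall j, P j -> summ (F j)) ->
  Sp (fun x => \sum_(j <- rs | P j) F j x)%R = (\sum_(j <- rs | P j) Sp (F j))%R.
Proof.
move=> H; elim: rs => [|j rs IH].
  rewrite big_nil; transitivity (Sp (fun _ => 0%R)); last exact: Sp0.
  by apply: Sp_ext => x; rewrite big_nil.
rewrite big_cons; case Pj: (P j).
  rewrite -IH -Sp_add; first by apply: Sp_ext => x; rewrite big_cons Pj.
    exact: H.
  exact: summ_sum.
by rewrite -IH; apply: Sp_ext => x; rewrite big_cons Pj.
Qed.

Lemma summ_l2 u v : in_l2 u -> in_l2 v -> summ (fun x => u x * v x)%R.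
Proof.
rewrite /in_l2 /sqnorm => fu fv.
apply: (esum_le_fin (r := fun x => u x ^+ 2 + v x ^+ 2)%R).
  move=> x; rewrite normr_ge0 /=; set a := u x; set b := v x.
  have := sqr_ge0 (a - b); have := sqr_ge0 (a + b).
  rewrite !expr2 => h1 h2.
  case: (lerP 0 (a * b)) => hab.
    by rewrite ger0_norm //; nra.
  by rewrite ltr0_norm //; nra.
by apply: esum_add_fin fu fv => x; exact: sqr_ge0.
Qed.


Lemma sqnorm_pt u y : ((u y ^+ 2)%:E <= sqnorm u).
Proof.
rewrite /sqnorm; apply: esum_ge; exists [set y]%classic.
  by split; [exact: finite_set1 | by []].
by rewrite fsbig_set1.
Qed.

Lemma pt_small u (e : R) : (0 < e)%R -> sqnorm u < (e ^+ 2)%:E -> forall y, (`|u y| < e)%R.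
Proof.
move=> e0 h y; have := le_lt_trans (sqnorm_pt u y) h; rewrite lte_fin => h2.
move: h2; set a := u y; rewrite !expr2 => h2.
by case: (lerP 0 a) => ha; [rewrite ger0_norm //; nra | rewrite ltr0_norm //; nra].
Qed.

End Analysis.

Section Closure.
Variables (R : realType) (I : countType) (n : nat).
Implicit Types (u v : vec R I n).

Definition wsum (B : {set 'I_n}) (w : 'S_n -> R) u : vec R I n :=
  fun x => \sum_(s | perm_on B s) w s * pact s u x.

Lemma small_zero (r K : R) : (0 <= K) -> (forall e, 0 < e -> `|r| <= K * e) -> r = 0.
Proof.
move=> K0 H; apply/eqP; apply: contraT => r0.
have ra : 0 < `|r| by rewrite normr_gt0.
have := H (`|r| / (K + 1)); rewrite divr_gt0 ?ltr_wpDl // => /(_ isT).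
rewrite mulrA => h; have : K * `|r| / (K + 1) < `|r|.
  rewrite ltr_pdivrMr ?ltr_wpDl //; nra.
by rewrite ltNge h.
Qed.

Lemma wsum_lspan B w (S : set (vec R I n)) :
  (forall u, S u -> forall x, wsum B w u x = 0) ->
  forall u, lspan S u -> forall x, wsum B w u x = 0.
Proof.
move=> H u [m [c [g [Sg ->]]]] x; rewrite /wsum.
rewrite (eq_bigr (fun s => \sum_(i < m) c i * (w s * pact s (g i) x))); last first.
  by move=> s _; rewrite /pact mulr_sumr; apply: eq_bigr => i _; rewrite mulrCA.
rewrite exchange_big /= big1 // => i _; rewrite -mulr_sumr.
by have := H _ (Sg i) x; rewrite /wsum => ->; rewrite mulr0.
Qed.

Lemma wsum_closure B w (S : set (vec R I n)) :
  (forall u, S u -> forall x, wsum B w u x = 0) ->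
  forall g, l2closure (lspan S) g -> forall x, wsum B w g x = 0.
Proof.
move=> H g [_ cl] x.
set K := \sum_(s | perm_on B s) `|w s|.
apply: (@small_zero _ K); first by rewrite /K sumr_ge0.
move=> e e0.
have [psi [Lpsi hpsi]] := cl (e ^+ 2) (exprn_gt0 2 e0).
have hp := pt_small e0 hpsi.
have -> : wsum B w g x = wsum B w g x - wsum B w psi x.
  by rewrite (wsum_lspan H Lpsi) subr0.
rewrite /wsum -sumrB /K mulr_suml.
apply: le_trans (ler_norm_sum _ _ _) _.
apply: ler_sum => s _; rewrite -mulrBr normrM ler_wpM2l //.
by rewrite !pact_app ltW // hp.
Qed.

End Closure.

Section Span.
Variables (R : realType) (I : countType) (n : nat).
Implicit Types (u v : vec R I n) (S : set (vec R I n)).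

Lemma lspan_ext S u v : (forall x, u x = v x) -> lspan S u -> lspan S v.
Proof. by move=> e; rewrite (_ : u = v) //; apply: funext. Qed.

Lemma lspan_nil S : lspan S (fun _ => 0).
Proof.
exists 0%N, (fun _ => 0), (fun _ _ => 0); split; first by case.
by apply: funext => x; rewrite big_ord0.
Qed.

Lemma lspan_cons S s u (a : R) : S s -> lspan S u -> lspan S (fun x => a * s x + u x).
Proof.
move=> Ss [m [c [g [Sg ->]]]].
exists m.+1, (fun i => if unlift ord0 i is Some i' then c i' else a),
  (fun i => if unlift ord0 i is Some i' then g i' else s); split.
  by move=> i; case: (unlift ord0 i).
apply: funext => x; rewrite big_ord_recl unlift_none; congr (_ + _).
by apply: eq_bigr => i _; rewrite liftK.
Qed.

Lemma lspan_sum S (J : Type) (rs : seq J) (P : pred J) (F : J -> vec R I n) (a : R) :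
  (forall j, P j -> S (F j)) -> lspan S (fun x => \sum_(j <- rs | P j) a * F j x).
Proof.
move=> H; elim: rs => [|j rs IH].
  by apply: (lspan_ext _ (lspan_nil S)) => x; rewrite big_nil.
case Pj: (P j).
  apply: (lspan_ext (u := fun x => a * F j x + \sum_(j <- rs | P j) a * F j x)).
    by move=> x; rewrite big_cons Pj.
  by apply: lspan_cons => //; apply: H.
by apply: (lspan_ext _ IH) => x; rewrite big_cons Pj.
Qed.

Lemma overlap (D B : {set 'I_n}) : (#|D| + #|B| = n + 2)%N ->
  exists a b, [/\ a != b, a \in D, a \in B, b \in D & b \in B].
Proof.
move=> h; have h1 := cardsUI D B; have h2 := max_card (D :|: B).
rewrite card_ord in h2.
have : (1 < #|D :&: B|)%N by lia.
case/card_gt1P => a [b [aDB bDB ab]].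
by exists a, b; move: aDB bDB; rewrite !inE => /andP[-> ->] /andP[-> ->].
Qed.

Lemma card_perm_gt0 (E : {set 'I_n}) : (#|perm_on E|%:R : R) != 0.
Proof. by rewrite card_perm pnatr_eq0 -lt0n fact_gt0. Qed.

End Span.

Section Main.
Variables (R : realType) (I : countType) (k q : nat).
Local Notation N := (k + q)%N.
Local Notation A := [set i : 'I_(k + q) | (i < k)%N].
Local Notation E := (~: [set i : 'I_(k + q) | (i < k)%N]).
Implicit Types (f g h : vec R I (k + q)).

Lemma cardA : #|A| = k.
Proof.
have -> : A = [set widen_ord (leq_addr q k) i | i in 'I_k].
  apply/setP => x; rewrite inE; apply/idP/imsetP => [xk|[i _ ->]] //=.
  by exists (Ordinal xk) => //; apply: val_inj.
by rewrite card_imset ?card_ord // => i j /(congr1 val) /= /val_inj.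
Qed.

Lemma cardE : #|E| = q.
Proof. by have := cardsC A; rewrite cardA card_ord; lia. Qed.

Lemma E_eq : [set i : 'I_(k + q) | (k <= i)%N] = E.
Proof. by apply/setP => i; rewrite !inE -leqNgt. Qed.

Lemma Hkq_iff f : Hkq f <-> [/\ in_l2 f, symm_on A f & skew_on E f].
Proof. by rewrite /Hkq /= E_eq; split => [[? [? ?]]|[? ? ?]]. Qed.

Lemma in_l2_syA (B : {set 'I_(k + q)}) j f : in_l2 f -> in_l2 (syA B j f).
Proof.
move=> fl; apply: in_l2_add => //.
by apply: in_l2_sum => c _; apply: in_l2_pact.
Qed.

Lemma in_l2_alE (B : {set 'I_(k + q)}) i f : in_l2 f -> in_l2 (alE B i f).
Proof.
move=> fl; apply: (in_l2_ext (u := fun x => f x + (-1) * \sum_(c in B) pact (tperm i c) f x)).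
  by move=> x; rewrite mulN1r.
apply: in_l2_add => //; apply: in_l2_scale.
by apply: in_l2_sum => c _; apply: in_l2_pact.
Qed.

Definition gpart f : vec R I (k + q) := fun x => (N%:R)^-1 * Gop A f x.
Definition hpart f : vec R I (k + q) := fun x => (N%:R)^-1 * Hop A f x.

Lemma in_l2_gpart f : in_l2 f -> in_l2 (gpart f).
Proof.
move=> fl; apply: in_l2_scale; apply: in_l2_sum => j _; exact: in_l2_syA.
Qed.

Lemma in_l2_hpart f : in_l2 f -> in_l2 (hpart f).
Proof.
move=> fl; apply: in_l2_scale; apply: in_l2_sum => j _; exact: in_l2_alE.
Qed.

Lemma symm_scale (B : {set 'I_(k + q)}) (a : R) f : symm_on B f -> symm_on B (fun x => a * f x).
Proof. by move=> sf s Bs; apply: funext => x; rewrite pact_app (symm_app _ sf Bs). Qed.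

Lemma skew_scale (B : {set 'I_(k + q)}) (a : R) f : skew_on B f -> skew_on B (fun x => a * f x).
Proof. by move=> sf s Bs; apply: funext => x; rewrite pact_app (skew_app _ sf Bs) mulrCA. Qed.

Lemma Hkq_gpart f : Hkq f -> Hkq (gpart f).
Proof.
case/Hkq_iff => fl sA kE; apply/Hkq_iff; split; first exact: in_l2_gpart.
  by apply: symm_scale; apply: Gop_symm.
by apply: skew_scale; apply: Gop_skew.
Qed.

Lemma Hkq_hpart f : Hkq f -> Hkq (hpart f).
Proof.
case/Hkq_iff => fl sA kE; apply/Hkq_iff; split; first exact: in_l2_hpart.
  by apply: symm_scale; apply: Hop_symm.
by apply: skew_scale; apply: Hop_skew.
Qed.

Lemma decomp f (hn : (0 < N)%N) x : f x = gpart f x + hpart f x.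
Proof.
rewrite /gpart /hpart -mulrDr /Gop /Hop key_identity.
by rewrite mulKf // pnatr_eq0 -lt0n.
Qed.


Lemma E0 : q = 0%N -> E = finset.set0.
Proof. by move=> q0; apply: cards0_eq; rewrite cardE. Qed.
Lemma A0 : k = 0%N -> A = finset.set0.
Proof. by move=> k0; apply: cards0_eq; rewrite cardA. Qed.

Lemma in_l2_symF (B : {set 'I_(k + q)}) f : in_l2 f -> in_l2 (symF B f).
Proof. by move=> fl; apply: in_l2_sum => s _; apply: in_l2_pact. Qed.

Lemma in_l2_altF (B : {set 'I_(k + q)}) f : in_l2 f -> in_l2 (altF B f).
Proof. by move=> fl; apply: in_l2_sum => s _; apply: in_l2_scale; apply: in_l2_pact. Qed.

Lemma closure_self (S : set (vec R I (k + q))) g : in_l2 g -> lspan S g -> l2closure (lspan S) g.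
Proof.
move=> gl Lg; split => // e e0; exists g; split => //.
rewrite /sqnorm esum1 ?lte_fin // => x _; by rewrite subrr expr0n.
Qed.

Lemma gpart_mixed f : Hkq f -> mixed (k.+1)%:Z (q%:Z - 1) (gpart f).
Proof.
case/Hkq_iff => fl sA kE; rewrite /mixed.
have [q0|qpos] := posnP q.
  have -> : (0 <= q%:Z - 1) = false by rewrite q0.
  rewrite andbF /=; apply: funext => x; rewrite /gpart /Gop big1 ?mulr0 // => j.
  by rewrite (E0 q0) inE.
have -> : ((0 <= (k.+1)%:Z) && (0 <= q%:Z - 1) && ((k.+1)%:Z + (q%:Z - 1) == (k + q)%N%:Z)) = true.
  apply/andP; split; first (apply/andP; split => //; lia).
  by apply/eqP; lia.
rewrite absz_nat; apply: closure_self; first exact: in_l2_gpart.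
set c : R := (N%:R)^-1 / (#|perm_on A|)%:R.
apply: (lspan_ext (u := fun x => \sum_(j in E) c * symF (j |: A) f x)).
  move=> x; rewrite /gpart /Gop mulr_sumr; apply: eq_bigr => j jE.
  rewrite symF_coset //; last by rewrite inE in jE.
  by rewrite /c mulrA divfK // card_perm_gt0.
apply: lspan_sum => j jE; have jA : j \notin A by rewrite inE in jE.
split; first exact: in_l2_symF.
exists (j |: A); split; first by rewrite cardsU1 jA cardA.
split; first exact: symF_symm.
apply: symF_skew_out; first exact: disjC.
apply: skew_onS kE; rewrite finset.setCS; exact: subsetU1.
Qed.

Lemma hpart_mixed f : Hkq f -> mixed (k%:Z - 1) (q.+1)%:Z (hpart f).
Proof.
case/Hkq_iff => fl sA kE; rewrite /mixed.
have [k0|kpos] := posnP k.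
  have -> : (0 <= k%:Z - 1) = false by rewrite k0.
  rewrite /=; apply: funext => x; rewrite /hpart /Hop big1 ?mulr0 // => j.
  by rewrite (A0 k0) inE.
have -> : ((0 <= k%:Z - 1) && (0 <= (q.+1)%:Z) && (k%:Z - 1 + (q.+1)%:Z == (k + q)%N%:Z)) = true.
  apply/andP; split; first (apply/andP; split => //; lia).
  by apply/eqP; lia.
have -> : `|k%:Z - 1|%N = k.-1.
  have -> : k%:Z - 1 = (k.-1)%:Z by lia.
  by rewrite absz_nat.
apply: closure_self; first exact: in_l2_hpart.
set c : R := (N%:R)^-1 / (#|perm_on E|)%:R.
apply: (lspan_ext (u := fun x => \sum_(i in A) c * altF (i |: E) f x)).
  move=> x; rewrite /hpart /Hop mulr_sumr; apply: eq_bigr => i iA.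
  rewrite altF_coset //; last by rewrite inE negbK.
  by rewrite /c mulrA divfK // card_perm_gt0.
apply: lspan_sum => i iA; have iE : i \notin E by rewrite inE negbK.
split; first exact: in_l2_altF.
exists (~: (i |: E)); split.
  have := cardsC (i |: E); rewrite cardsU1 iE cardE card_ord /=.
  set m := #|~: (i |: E)|; lia.
split.
  apply: altF_symm_out; first exact: disjC.
  apply: symm_onS sA; have := subsetU1 i E; rewrite -finset.setCS finset.setCK; exact.
by rewrite finset.setCK; exact: altF_skew.
Qed.


Lemma wsum1 (B : {set 'I_(k + q)}) (u : vec R I (k + q)) x : wsum B (fun _ => 1) u x = symF B u x.
Proof. by apply: eq_bigr => s _; rewrite mul1r. Qed.

Lemma gp_kill g : Hkq g -> mixed (k.+1)%:Z (q%:Z - 1) g ->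
  forall i x, i \in A -> alE E i g x = 0.
Proof.
case/Hkq_iff => gl sA kE; rewrite /mixed => Hm i x iA.
have iE : i \notin E by rewrite inE negbK.
have [q0|qpos] := posnP q.
  move: Hm; have -> : (0 <= q%:Z - 1) = false by rewrite q0.
  rewrite andbF /= => ->; rewrite /alE big1 ?subrr // => c _.
move: Hm; have -> : ((0 <= (k.+1)%:Z) && (0 <= q%:Z - 1) && ((k.+1)%:Z + (q%:Z - 1) == (k + q)%N%:Z)) = true.
  apply/andP; split; first (apply/andP; split => //; lia).
  by apply/eqP; lia.
rewrite absz_nat => Hm.
have H0 : altF (i |: E) g x = 0.
  apply: (wsum_closure (w := @sgn R _) _ Hm) => u [ul [D [cD [sD _]]]] y.
  have [a [b [ab aD aB bD bB]]] : exists a b, [/\ a != b, a \in D, a \in i |: E, b \in D & b \in i |: E].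
    by apply: overlap; rewrite cD cardsU1 iE cardE; lia.
  exact: (altF_kill ab aB bB aD bD sD).
move: H0; rewrite altF_coset // => /eqP; rewrite mulf_eq0 (negbTE (card_perm_gt0 R _)) /=.
by move/eqP.
Qed.

Lemma hp_kill h : Hkq h -> mixed (k%:Z - 1) (q.+1)%:Z h ->
  forall j x, j \in E -> syA A j h x = 0.
Proof.
case/Hkq_iff => hl sA kE; rewrite /mixed => Hm j x jE.
have jA : j \notin A by rewrite inE in jE.
have [k0|kpos] := posnP k.
  move: Hm; have -> : (0 <= k%:Z - 1) = false by rewrite k0.
  rewrite /= => ->; rewrite /syA big1 ?addr0 // => c _.
move: Hm; have -> : ((0 <= k%:Z - 1) && (0 <= (q.+1)%:Z) && (k%:Z - 1 + (q.+1)%:Z == (k + q)%N%:Z)) = true.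
  apply/andP; split; first (apply/andP; split => //; lia).
  by apply/eqP; lia.
have -> : `|k%:Z - 1|%N = k.-1.
  have -> : k%:Z - 1 = (k.-1)%:Z by lia.
  by rewrite absz_nat.
move=> Hm.
have H0 : symF (j |: A) h x = 0.
  rewrite -wsum1; apply: (wsum_closure _ Hm) => u [ul [D [cD [_ kD]]]] y.
  rewrite wsum1.
  have [a [b [ab aD aB bD bB]]] : exists a b, [/\ a != b, a \in ~: D, a \in j |: A, b \in ~: D & b \in j |: A].
    apply: overlap; rewrite cardsU1 jA cardA.
    have := cardsC D; rewrite cD card_ord; lia.
  exact: (symF_kill ab aB bB aD bD kD).
move: H0; rewrite symF_coset // => /eqP; rewrite mulf_eq0 (negbTE (card_perm_gt0 R _)) /=.
by move/eqP.
Qed.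


Lemma Sp_natmul (m : nat) (p : multi I (k + q) -> R) : summ p ->
  Sp (fun x => m%:R * p x) = m%:R * Sp p.
Proof.
move=> sp; elim: m => [|m IH].
  by rewrite mul0r -(Sp0 R I (k + q)); apply: Sp_ext => x; rewrite mul0r.
rewrite -addn1 natrD mulrDl mul1r -IH -Sp_add //.
  by apply: Sp_ext => x; rewrite mulrDl mul1r.
by apply: (summ_ext (p := fun x => \sum_(i < m) p x)) => [x|];
  [rewrite sumr_const card_ord mulr_natl | apply: summ_sum].
Qed.

Lemma ixK2 (a b : 'I_(k + q)) (x : multi I (k + q)) : ix (tperm a b) (ix (tperm a b) x) = x.
Proof. by rewrite ixM tperm2 ix1. Qed.

Lemma adjoint g h j : in_l2 g -> in_l2 h ->
  Sp (fun x => syA A j g x * h x) = Sp (fun x => g x * syA A j h x).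
Proof.
move=> gl hl.
have s1 : forall c, summ (fun x => pact (tperm c j) g x * h x).
  by move=> c; apply: summ_l2 => //; apply: in_l2_pact.
have s2 : forall c, summ (fun x => g x * pact (tperm c j) h x).
  by move=> c; apply: summ_l2 => //; apply: in_l2_pact.
rewrite (Sp_ext (r := fun x => g x * h x + \sum_(c in A) pact (tperm c j) g x * h x)); last first.
  by move=> x; rewrite /syA mulrDl mulr_suml.
rewrite [RHS](Sp_ext (r := fun x => g x * h x + \sum_(c in A) g x * pact (tperm c j) h x)); last first.
  by move=> x; rewrite /syA mulrDr mulr_sumr.
rewrite !Sp_add ?summ_l2 //; try by apply: summ_sum.
rewrite !Sp_sum //; congr (_ + _); apply: eq_bigr => c _.
rewrite -(Sp_ix (tperm c j)); apply: Sp_ext => x.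
by rewrite !pact_app ixK2.
Qed.

Lemma orth g h : (0 < N)%N -> Hkq g -> mixed (k.+1)%:Z (q%:Z - 1) g ->
  Hkq h -> mixed (k%:Z - 1) (q.+1)%:Z h -> inner g h = 0.
Proof.
move=> hn Hg Mg Hh Mh.
have [gl _ _] := (Hkq_iff g).1 Hg; have [hl _ _] := (Hkq_iff h).1 Hh.
have GE x : Gop A g x = N%:R * g x.
  rewrite -(key_identity A g x) -[LHS]addr0; congr (_ + _).
  by rewrite /Hop big1 // => i iA; rewrite (gp_kill Hg Mg).
have : N%:R * inner g h = 0.
  rewrite innerE -Sp_natmul; last exact: summ_l2.
  rewrite (Sp_ext (r := fun x => \sum_(j in E) syA A j g x * h x)); last first.
    by move=> x; rewrite mulrA -GE /Gop mulr_suml.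
  rewrite Sp_sum; last by move=> j _; apply: summ_l2 => //; apply: in_l2_syA.
  rewrite big1 // => j jE; rewrite adjoint //.
  rewrite (Sp_ext (r := fun _ => 0)); first exact: Sp0.
  by move=> x; rewrite (hp_kill Hh Mh) // mulr0.
by move/eqP; rewrite mulf_eq0 pnatr_eq0 eqn0Ngt hn /= => /eqP.
Qed.


Lemma Hkq_add g h : Hkq g -> Hkq h -> Hkq (fun x => g x + h x).
Proof.
move=> /Hkq_iff[gl sg kg] /Hkq_iff[hl sh kh]; apply/Hkq_iff; split.
- exact: in_l2_add.
- by move=> s As; apply: funext => x; rewrite pact_app (symm_app _ sg As) (symm_app _ sh As).
- by move=> s As; apply: funext => x; rewrite pact_app (skew_app _ kg As) (skew_app _ kh As) mulrDr.
Qed.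

End Main.

Local Open Scope classical_set_scope.

Theorem lemma3p4 (R : realType) (I : countType) (k q : nat) (hn : (0 < k + q)%N) :
  let Hp := @Hkq R I k q `&` @mixed R I (k + q) (k.+1)%:Z (q%:Z - 1) in
  let Hm := @Hkq R I k q `&` @mixed R I (k + q) (k%:Z - 1) (q.+1)%:Z in
  (forall g h, Hp g -> Hm h -> inner g h = 0) /\
  @Hkq R I k q = [set f | exists g h, Hp g /\ Hm h /\ f = (fun x => g x + h x)].
Proof.
move=> Hp Hm; split.
  by move=> g h [Hg Mg] [Hh Mh]; exact: orth.
apply/seteqP; split => f /=.
  move=> Hf; exists (gpart f), (hpart f); split.
    by split; [exact: Hkq_gpart | exact: gpart_mixed].
  split; first by split; [exact: Hkq_hpart | exact: hpart_mixed].
  by apply: funext => x; exact: decomp.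
by move=> [g [h [[Hg _] [[Hh _] ->]]]]; exact: Hkq_add.
Qed.
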